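(* Let $T\colon\mathbb{R}[x]\to\mathbb{R}[x]$ be the linear transformation determined by $T[x^n]=P_n^{Le}(x)$ for all $n\ge0$, and write $T=\sum_{n=0}^\infty\frac{Q_n^{Le}(x)}{n!}D^n$. Then for all $k\ge0$, $$Q^{Le}_{2k+1}(x)=0,\qquad Q^{Le}_{2k}(x)=\frac{(2k-1)!!}{(2k)!!}(x^2-1)^k.$$ Hence $T=\sum_{k=0}^\infty\frac{(2k-1)!!}{(2k)!!\,(2k)!}(x^2-1)^kD^{2k}$.
   Context: $P_n^{Le}(x)=\frac{1}{2^nn!}\frac{d^n}{dx^n}(x^2-1)^n$ is the $n$th Legendre polynomial; $D=d/dx$. Every linear operator $T\colon\mathbb{C}[x]\to\mathbb{C}[x]$ has a unique representation $T=\sum_{k=0}^\infty \frac{Q_k(x)}{k!}D^k$ with polynomials $Q_k(x)$. Double factorials use the conventions $(-1)!!=1$ and $0!!=1$. *)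

(* Defs.v *)
From HB Require Import structures.
From mathcomp Require Import all_boot all_order all_algebra.
From mathcomp Require Import reals.
Set Implicit Arguments. Unset Strict Implicit. Unset Printing Implicit Defensive.
Import Order.TTheory GRing.Theory Num.Theory.
Local Open Scope ring_scope.

(* Double factorial on nat: 0!! = 1, 1!! = 1, (n+2)!! = (n+2) * n!!.
   (2k-1)!! is written dfact k.*2.-1, so for k = 0 it is dfact 0 = 1,
   matching the convention (-1)!! = 1. *)
Fixpoint dfact (n : nat) : nat :=
  match n with
  | 0 => 1
  | 1 => 1
  | (m.+2) as n' => (n' * dfact m)%N
  end.

Definition legendre (R : fieldType) (n : nat) : {poly R} :=
  ((2 ^ n * n`!)%N%:R)^-1 *: ((('X^2 - 1) ^+ n)^`(n)).

(* Main.v *)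
Require Import Defs.
From HB Require Import structures.
From mathcomp Require Import all_boot all_order all_algebra.
From mathcomp Require Import reals.
From mathcomp Require Import ring lra zify.
Import Order.TTheory GRing.Theory Num.Theory.
Local Open Scope ring_scope.

Lemma dfact_odd k : dfact k.*2.+1 = (k.*2.+1 * dfact k.*2.-1)%N.
Proof. by case: k => [|k] //=; rewrite muln1. Qed.

Lemma dfact_even k : dfact k.*2 = (2 ^ k * k`!)%N.
Proof.
elim: k => [|k IH] //.
rewrite doubleS /= IH factS expnS -!muln2; ring.
Qed.

Lemma dfact_prod k : (dfact k.*2.-1 * dfact k.*2 = (k.*2)`!)%N.
Proof.
elim: k => [|k IH] //.
rewrite doubleS (_ : (k.*2.+2).-1 = k.*2.+1)%N // dfact_odd.
rewrite (_ : dfact k.*2.+2 = k.*2.+2 * dfact k.*2)%N // !factS -IH -!muln2; ring.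
Qed.

Lemma dfact_gt0 k : (0 < dfact k)%N.
Proof.
elim/ltn_ind: k => -[|[|k]] IH //=.
by rewrite muln_gt0 IH.
Qed.

Lemma sum_even (V : zmodType) N (f : nat -> V) :
  (forall k, f k.*2.+1 = 0) -> (forall k, (N <= k)%N -> f k = 0) ->
  \sum_(k < N) f k = \sum_(k < N) f k.*2.
Proof.
move=> hodd hbig.
have H M : \sum_(0 <= k < M.*2) f k = \sum_(0 <= k < M) f k.*2.
  elim: M => [|M IH]; first by rewrite !big_geq.
  by rewrite doubleS !big_nat_recr //= IH hodd addr0.
have E0 : \sum_(N <= i < N.*2) f i = 0.
  apply: big1_seq => k /=.
  by rewrite mem_index_iota => /andP[hk _]; apply: hbig.
rewrite -(big_mkord xpredT) -(big_mkord xpredT (fun k => f k.*2)) -H.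
rewrite (@big_cat_nat _ _ _ N 0 N.*2 xpredT f (leq0n N)); last by rewrite -addnn leq_addr.
by rewrite E0 /= addr0.
Qed.

Section S.
Variable R : numFieldType.
Local Notation E := ('X^2 - 1 : {poly R}).

Lemma nz n : (0 < n)%N -> n%:R != 0 :> R.
Proof. by rewrite pnatr_eq0 -lt0n. Qed.
Ltac fside := rewrite -?natrD ?nat1r -?natrD ?nat1r; repeat (apply/andP; split); apply: nz; by rewrite ?fact_gt0.

Definition fdb (n j m : nat) : R := if (m.*2 <= j)%N then
  ((j`! * n`!)%:R * 2 ^+ (j - m.*2)) / ((m`! * (j - m.*2)`! * (n - j + m)`!)%:R) else 0.

Lemma fdb0 n j : (j < n)%N -> fdb n j.+1 0 = fdb n j 0 * 2 * (n - j + 0)%:R.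
Proof.
move=> hjn; rewrite /fdb /=.
have [s hs] : exists s, (n - j = s.+1)%N by exists (n - j)%N.-1; lia.
have -> : (n - j.+1 + 0 = s)%N by lia.
rewrite hs !subn0 !addn0 !factS.
set J := j`!.
rewrite !natrM !exprS.
by field; fside.
Qed.

Lemma fdbS n j m : (j < n)%N ->
  fdb n j.+1 m.+1 = fdb n j m * (j - m.*2)%:R + fdb n j m.+1 * 2 * (n - j + m.+1)%:R.
Proof.
move=> hjn.
have [s hs] : exists s, (n - j = s.+1)%N by exists (n - j)%N.-1; lia.
rewrite /fdb.
case: (leqP (m.+1).*2 j) => h1.
  have [r hr] : exists r, (j - m.*2 = r.+2)%N by exists (j - m.*2 - 2)%N; lia.
  rewrite !ifT; [|lia..].
  have -> : (j.+1 - m.+1.*2 = r.+1)%N by lia.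
  have -> : (j - m.+1.*2 = r)%N by lia.
  have -> : (n - j.+1 + m.+1 = (s + m).+1)%N by lia.
  have -> : (n - j + m.+1 = (s + m).+2)%N by lia.
  have -> : (n - j + m = (s + m).+1)%N by lia.
  rewrite hr (factS j) !factS.
  set J := j`!. set N := n`!. set M := m`!. set F := (s+m)`!.
  have hj : (j.+1 = m.*2 + r.+3)%N by lia.
  rewrite hj -!mul2n !natrM !exprS. 
  by field; fside.
case: (leqP m.*2.+1 j) => h2.
  have hj : (j = m.*2.+1)%N by lia.
  have c1 : (m.+1.*2 <= j.+1)%N by lia.
  have c2 : (m.*2 <= j)%N by lia.
  have c3 : (m.+1.*2 <= j)%N = false by lia.
  rewrite c1 c2.
  have -> : (j.+1 - m.+1.*2 = 0)%N by lia.
  have -> : (j - m.*2 = 1)%N by lia.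
  have -> : (n - j.+1 + m.+1 = (s + m).+1)%N by lia.
  have -> : (n - j + m = (s + m).+1)%N by lia.
  rewrite (factS j) (factS m) fact0 (_ : 1`! = 1)%N // !mul0r addr0.
  set J := j`!. set N := n`!. set M := m`!. set F := (s+m).+1`!.
  rewrite hj -!mul2n !natrM !exprS expr0.
  by field; fside.
have c1 : (m.+1.*2 <= j.+1)%N = false by lia.
have c3 : (m.+1.*2 <= j)%N = false by lia.
rewrite c1.
have -> : (j - m.*2 = 0)%N by lia.
by rewrite !mulr0 !mul0r addr0.
Qed.

Lemma dterm (c : R) a b : (c *: ('X^a * E^+b))^`() =
  (c * a%:R) *: ('X^(a.-1) * E^+b) + (c * 2 * b%:R) *: ('X^(a.+1) * E^+(b.-1)).
Proof.
rewrite derivZ derivM derivXn deriv_exp derivB derivXn derivC.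
rewrite -!mul_polyC !polyCM (exprSr (@polyX R) a) subr0 !polyC_natr.
ring.
Qed.

Lemma fdb_derivn n j : (j <= n)%N -> (E^+n)^`(j) =
  \sum_(0 <= m < n.+1) fdb n j m *: ('X^(j - m.*2) * E^+(n - j + m)).
Proof.
elim: j => [|j IH] hj.
  rewrite derivn0 big_nat_recl // big1 ?addr0; last first.
    by move=> i _; rewrite /fdb /= scale0r.
  rewrite /fdb /= !subn0 !addn0 expr0 mul1r mul1n mulr1 divff ?scale1r //.
  by rewrite nz // fact_gt0.
rewrite derivnS IH; last lia.
rewrite raddf_sum.
rewrite (eq_bigr _ (fun i _ => dterm (fdb n j i) (j - i.*2) (n - j + i))).
rewrite big_split /= big_nat_recr //= !big_nat_recl //.
have -> : fdb n j n = 0 by rewrite /fdb ifF //; lia.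
rewrite mul0r scale0r addr0 addrCA; congr (_ + _).
  rewrite fdb0; last lia.
  have -> : (j.+1 - 0.*2 = (j - 0.*2).+1)%N by lia.
  by have -> : (n - j.+1 + 0 = (n - j + 0).-1)%N by lia.
rewrite -big_split; apply: eq_bigr => m _ /=.
have -> : (j.+1 - m.+1.*2 = (j - m.*2).-1)%N by lia.
have -> : (n - j.+1 + m.+1 = n - j + m)%N by lia.
have -> : ((n - j + m.+1).-1 = n - j + m)%N by lia.
rewrite fdbS; last lia.
case: (leqP (m.+1).*2 j) => h1.
  have -> : ((j - m.+1.*2).+1 = (j - m.*2).-1)%N by lia.
  by rewrite scalerDl.
have -> : fdb n j m.+1 = 0 by rewrite /fdb ifF //; lia.
by rewrite !mul0r scale0r !addr0.
Qed.

Definition Qp (k : nat) : {poly R} := if odd k then 0 else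
  ((dfact (k./2).*2.-1)%:R / (dfact (k./2).*2)%:R) *: E ^+ (k./2).

Lemma leg_eq n : legendre R n = \sum_(k < n.+1) (k`!%:R)^-1 *: (Qp k * ('X^n)^`(k)).
Proof.
rewrite (@sum_even _ n.+1 (fun k => (k`!%:R)^-1 *: (Qp k * ('X^n)^`(k)))); first last.
- move=> k hk; rewrite derivnXn ffact_small // mulr0n mulr0 scaler0 //.
- by move=> k; rewrite /Qp /= odd_double /= mul0r scaler0.
rewrite /legendre fdb_derivn // big_mkord scaler_sumr; apply: eq_bigr => m _.
rewrite subnn add0n /Qp odd_double half_double derivnXn.
case: (leqP m.*2 n) => h; last first.
  by rewrite /fdb leqNgt h /= (ffact_small h) mulr0n mulr0 scale0r !scaler0.
rewrite -scaler_nat -scalerAl -scalerAr !scalerA [E^+m * _]mulrC; congr (_ *: _).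
rewrite /fdb h subnn add0n.
have hD1 := dfact_gt0 (m.*2.-1).
have hF : (0 < n ^_ m.*2)%N by rewrite ffact_gt0.
rewrite -dfact_prod dfact_even -(ffact_fact h).
have e : (n - m.*2 + m + m = n)%N by lia.
rewrite (_ : 2 ^ n = 2 ^ (n - m.*2) * 2 ^ m * 2 ^ m)%N; last by rewrite -!expnD e.
rewrite !natrM !natrX.
by field; repeat (apply/andP; split); rewrite ?expf_neq0 ?nz ?fact_gt0.
Qed.
End S.

Theorem theorem7p4 (R : realType) (T : {linear {poly R} -> {poly R}})
    (Q : nat -> {poly R}) :
  (forall n : nat, T 'X^n = legendre R n) ->
  (forall p : {poly R},
      T p = \sum_(k < size p) (k`!%:R)^-1 *: (Q k * p^`(k))) ->
  (forall k : nat,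
      Q k.*2.+1 = 0 /\
      Q k.*2 = ((dfact k.*2.-1)%:R / (dfact k.*2)%:R) *: ('X^2 - 1) ^+ k) /\
  (forall p : {poly R},
      T p = \sum_(k < size p)
              ((dfact k.*2.-1)%:R / ((dfact k.*2)%:R * (k.*2)`!%:R))
                *: (('X^2 - 1) ^+ k * p^`(k.*2))).
Proof.
move=> h1 h2.
have gX (P : {poly R}) n : (n`!%:R)^-1 *: (P * ('X^n)^`(n)) = P.
  rewrite derivnXn subnn expr0 ffactnn mulrnAr mulr1 -scaler_nat scalerA mulVf ?scale1r //.
  by rewrite nz // fact_gt0.
have hQ : forall n, Q n = Qp R n.
  elim/ltn_ind => n IH.
  have := h2 'X^n; rewrite h1 size_polyXn leg_eq !big_ord_recr /=.
  have -> : \sum_(i < n) (i`!%:R)^-1 *: (Q i * ('X^n)^`(i)) =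
            \sum_(i < n) (i`!%:R)^-1 *: (Qp R i * ('X^n)^`(i)).
    by apply: eq_bigr => i _; rewrite IH.
  by move/addrI; rewrite !gX => ->.
split.
  move=> k; split; first by rewrite hQ /Qp /= odd_double.
  by rewrite hQ /Qp odd_double half_double.
move=> p; rewrite h2.
rewrite (@sum_even _ (size p) (fun k => (k`!%:R)^-1 *: (Q k * p^`(k)))); first last.
- by move=> k hk; rewrite derivn_poly0 // mulr0 scaler0.
- by move=> k; rewrite hQ /Qp /= odd_double /= mul0r scaler0.
apply: eq_bigr => k _; rewrite hQ /Qp odd_double half_double -scalerAl scalerA.
congr (_ *: _).
by rewrite invfM; ring.
Qed.
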